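(* For all $n\ge1$ and $k\ge1$, the greedy min-flip list $\mathcal{G}(n,k)$ has flip sequence $\sigma^k_n$; that is, if $\mathcal{G}(n,k)=G_1,\dots,G_N$ and $\sigma^k_n=f_1,\dots,f_{N'}$, then $N'=N-1$ and $G_{t+1}=\mathrm{flip}_{f_t}(G_t)$ for all $1\le t\le N-1$.
   Context: Fix integers $n\ge1$, $k\ge1$. A $k$-coloured permutation of $\{1,\dots,n\}$ is a sequence $\pi=p_1\cdots p_n$ with $p_i=v_i^{c_i}$, where $v_1\cdots v_n$ is a permutation of $\{1,\dots,n\}$ and each $c_i\in\{0,\dots,k-1\}$; the set of these is $\mathbf{C}(n,k)$. For $p=v^c$, $p^{+1}=v^{(c+1)\bmod k}$. For $1\le i\le n$, $\mathrm{flip}_i(p_1\cdots p_n)=p_i^{+1}p_{i-1}^{+1}\cdots p_1^{+1}p_{i+1}\cdots p_n$. The greedy min-flip list $\mathcal{G}(n,k)$ is produced as follows: start with $G_1=1^02^0\cdots n^0$; having produced $G_1,\dots,G_t$, let $i$ be the smallest integer in $\{1,\dots,n\}$ such that $\mathrm{flip}_i(G_t)\notin\{G_1,\dots,G_t\}$, and set $G_{t+1}=\mathrm{flip}_i(G_t)$; if no such $i$ exists, stop, and $\mathcal{G}(n,k)=G_1,\dots,G_t$. The sequence $\sigma^k_n$ is defined by $\sigma^k_1=1^{k-1}$ (the value $1$ repeated $k-1$ times; empty if $k=1$) and, for $n>1$, $\sigma^k_n=(\sigma^k_{n-1},n)^{kn-1},\sigma^k_{n-1}$, i.e. $kn-1$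 copies of the block ''$\sigma^k_{n-1}$ followed by $n$'', followed by one more copy of $\sigma^k_{n-1}$. *)

(* Defs.v *)
From mathcomp Require Import all_boot.
Set Implicit Arguments. Unset Strict Implicit. Unset Printing Implicit Defensive.

(* A k-coloured permutation p_1 ... p_n is a sequence of pairs (v_i, c_i):
   value v_i in {1..n} (the v_i forming a permutation) and colour c_i in {0..k-1}. *)
Definition cperm := seq (nat * nat).

Definition incr_col (k : nat) (p : nat * nat) : nat * nat := (p.1, (p.2.+1) %% k).

Definition flip (k i : nat) (pi : cperm) : cperm :=
  map (incr_col k) (rev (take i pi)) ++ drop i pi.

Definition start (n : nat) : cperm := [seq (v, 0) | v <- iota 1 n].

(* Step t -> t+1 (0-based index t in G) is the greedy min-flip step:
   i is the smallest in {1..n} with flip_i(G_t) not among G_1..G_t. *)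
Definition greedy_step (n k : nat) (G : seq cperm) (t : nat) : Prop :=
  exists i, [/\ 1 <= i <= n,
    nth [::] G t.+1 = flip k i (nth [::] G t),
    flip k i (nth [::] G t) \notin take t.+1 G &
    forall j, 1 <= j < i -> flip k j (nth [::] G t) \in take t.+1 G].

Definition greedy_list (n k : nat) (G : seq cperm) : Prop :=
  [/\ G <> [::], nth [::] G 0 = start n,
      forall t, t < (size G).-1 -> greedy_step n k G t &
      forall i, 1 <= i <= n -> flip k i (last [::] G) \in G].

(* sigma^k_1 = 1^{k-1};  sigma^k_n = (sigma^k_{n-1}, n)^{kn-1}, sigma^k_{n-1}.
   (sigma k 0 is an unused dummy value.) *)
Fixpoint sigma (k n : nat) : seq nat :=
  match n with
  | 0 => [::]
  | m.+1 =>
      if m is 0 then nseq k.-1 1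
      else flatten (nseq (k * m.+1).-1 (rcons (sigma k m) m.+1)) ++ sigma k m
  end.

(* Main.v *)
Require Import Defs.
From mathcomp Require Import all_boot.
From mathcomp Require Import zify.
Set Implicit Arguments. Unset Strict Implicit. Unset Printing Implicit Defensive.

Section S.
Variable k : nat.
Hypothesis hk : 0 < k.
Local Notation fl := (flip k).
Local Notation inc := (incr_col k).

Fixpoint fin (fs : seq nat) (p : cperm) : cperm :=
  if fs is f :: fs' then fin fs' (fl f p) else p.
Fixpoint pre (fs : seq nat) (p : cperm) : seq cperm :=
  if fs is f :: fs' then p :: pre fs' (fl f p) else [::].
Definition tr fs p := rcons (pre fs p) (fin fs p).
Fixpoint good (V : seq cperm) (fs : seq nat) (p : cperm) : Prop :=
  if fs is f :: fs' then
    [/\ fl f p \notin rcons V p, (forall j, 0 < j < f -> fl j p \in rcons V p)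
      & good (rcons V p) fs' (fl f p)]
  else True.

Lemma fin_cat a b p : fin (a ++ b) p = fin b (fin a p).
Proof. by elim: a p => //= f a IH p. Qed.
Lemma pre_cat a b p : pre (a ++ b) p = pre a p ++ pre b (fin a p).
Proof. by elim: a p => //= f a IH p; rewrite IH. Qed.
Lemma tr_cat a b p : tr (a ++ b) p = pre a p ++ tr b (fin a p).
Proof. by rewrite /tr pre_cat fin_cat rcons_cat. Qed.
Lemma tr_cons f fs p : tr (f :: fs) p = p :: tr fs (fl f p).
Proof. by []. Qed.
Lemma mem_tr_head fs p : p \in tr fs p.
Proof. by case: fs => [|f fs]; rewrite /tr /= ?in_cons eqxx. Qed.
Lemma size_tr fs p : size (tr fs p) = (size fs).+1.
Proof. rewrite /tr size_rcons; congr S; by elim: fs p => //= f fs IH p; rewrite IH. Qed.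

Lemma good_cat V a b p :
  good V (a ++ b) p <-> good V a p /\ good (V ++ pre a p) b (fin a p).
Proof.
elim: a V p => [|f a IH] V p /=; first by rewrite cats0; tauto.
split.
  by case=> h1 h2 /IH [h3 h4]; rewrite -cat_rcons.
by case=> [[h1 h2 h3] h4]; split => //; apply/IH; rewrite cat_rcons.
Qed.

Lemma good_lift V W fs p : good W fs p -> (forall q, q \in tr fs p -> q \notin V) ->
  good (V ++ W) fs p.
Proof.
elim: fs W p => [|f fs IH] W p //= [h1 h2 h3] hd.
rewrite rcons_cat; split.
- rewrite mem_cat negb_or h1 andbT; apply: hd.
  by rewrite tr_cons in_cons mem_tr_head orbT.
- by move=> j hj; rewrite mem_cat h2 ?orbT.
- apply: IH => // q hq; apply: hd; by rewrite tr_cons in_cons hq orbT.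
Qed.

Lemma flip0 p : fl 0 p = p.
Proof. by rewrite /flip take0 drop0. Qed.

Lemma size_flip i p : size (fl i p) = size p.
Proof. rewrite /flip size_cat size_map size_rev size_take size_drop.
case: ltnP => h; lia. Qed.

Lemma drop_flip i m p : i <= m -> drop m (fl i p) = drop m p.
Proof.
move=> him; rewrite /flip drop_cat size_map size_rev size_take.
case: (ltnP i (size p)) => hi.
  rewrite ltnNge him /= drop_drop; congr drop; lia.
have -> : (m < size p) = false by apply/negbTE; rewrite -leqNgt; lia.
rewrite (drop_oversize (n:=m) (s:=p)); last lia.
by rewrite drop_oversize // size_drop; lia.
Qed.

Definition Inv (p : cperm) := uniq (map fst p) && all (fun q => q.2 < k) p.

Lemma map_fst_flip i p :
  map fst (fl i p) = rev (map fst (take i p)) ++ map fst (drop i p).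
Proof. rewrite /flip map_cat; congr cat; rewrite -map_rev; by elim: (rev (take i p)) => //= x s ->. Qed.

Lemma Inv_flip i p : Inv p -> Inv (fl i p).
Proof.
case/andP=> hu ha; apply/andP; split.
  rewrite map_fst_flip.
  have hp : perm_eq (rev (map fst (take i p)) ++ map fst (drop i p))
                    (map fst (take i p) ++ map fst (drop i p)).
    by rewrite perm_cat2r perm_rev perm_refl.
  by rewrite (perm_uniq hp) -map_cat cat_take_drop.
apply/allP => q; rewrite /flip mem_cat => /orP [].
  by case/mapP => x _ ->; rewrite /incr_col /= ltn_pmod.
by move/mem_drop; move/allP: ha; apply.
Qed.

Lemma nth_tr0 fs p : nth [::] (tr fs p) 0 = p.
Proof. by case: fs. Qed.

Lemma tr_prop (P : cperm -> Prop) fs p :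
  P p -> (forall i q, P q -> P (fl i q)) -> forall q, q \in tr fs p -> P q.
Proof.
move=> hp hf; elim: fs p hp => [|f fs IH] p hp q.
  by rewrite /tr /= inE => /eqP ->.
by rewrite tr_cons inE => /orP [/eqP -> // | /IH]; apply; apply: hf.
Qed.

Lemma tr_drop m fs p : all (fun f => f <= m) fs ->
  forall q, q \in tr fs p -> drop m q = drop m p.
Proof.
elim: fs p => [|f fs IH] p /=.
  by move=> _ q; rewrite /tr /= inE => /eqP ->.
case/andP=> hf ha q; rewrite tr_cons inE => /orP [/eqP -> // | /(IH _ ha) ->].
by rewrite drop_flip.
Qed.

Lemma good_nth V fs p t : good V fs p -> t < size fs ->
  [/\ nth [::] (tr fs p) t.+1 = fl (nth 0 fs t) (nth [::] (tr fs p) t),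
      fl (nth 0 fs t) (nth [::] (tr fs p) t) \notin V ++ take t.+1 (tr fs p) &
      forall j, 0 < j < nth 0 fs t ->
        fl j (nth [::] (tr fs p) t) \in V ++ take t.+1 (tr fs p)].
Proof.
elim: fs V p t => [|f fs IH] V p t //= [h1 h2 h3] ht.
rewrite tr_cons; case: t ht => [|t] ht /=.
  by rewrite take0 nth_tr0 cats1.
by rewrite -cat_rcons; apply: IH.
Qed.

Definition Rn (n : nat) (q : cperm) : cperm :=
  inc (nth (0,0) q n) :: take n q ++ drop n.+1 q.

Lemma flipR n u : n < size u -> fl n.+1 u = Rn n (fl n u).
Proof.
move=> hn; rewrite /Rn.
have hs : size (map inc (rev (take n u))) = n by rewrite size_map size_rev size_takel // ltnW.
rewrite drop_flip // {2 3}/flip nth_cat take_cat hs ltnn subnn take0 cats0 nth_drop addn0.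
by rewrite /flip (take_nth (0,0) hn) rev_rcons.
Qed.

Lemma R_cat n a b (A B d : cperm) : a + b = n -> size A = a -> size B = b.+1 ->
  Rn n (A ++ B ++ d) = inc (nth (0,0) B b) :: A ++ take b B ++ d.
Proof.
move=> hn ha hb; rewrite /Rn nth_cat take_cat drop_cat ha.
have -> : (n < a) = false by apply/negbTE; rewrite -leqNgt; lia.
have -> : (n.+1 < a) = false by apply/negbTE; rewrite -leqNgt; lia.
rewrite nth_cat take_cat drop_cat hb.
have -> : n - a = b by lia.
have -> : n.+1 - a = b.+1 by lia.
by rewrite ltnSn ltnn subnn drop0 catA.
Qed.

Lemma iterR n m q : m <= n.+1 -> n < size q ->
  iter m (Rn n) q = map inc (drop (n.+1 - m) (take n.+1 q)) ++ take (n.+1 - m) q ++ drop n.+1 q.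
Proof.
move=> hm hq; elim: m hm => [|m IH] hm.
  by rewrite subn0 /= drop_oversize ?cat_take_drop // size_takel.
rewrite iterS IH ?(ltnW hm) //.
set r := n.+1 - m.+1.
have hr : n.+1 - m = r.+1 by rewrite /r; lia.
rewrite hr (R_cat (a := m) (b := r)); first last.
- by rewrite size_takel //; lia.
- by rewrite size_map size_drop size_takel //; lia.
- by rewrite /r; lia.
rewrite nth_take // take_takel //.
rewrite [drop r _](drop_nth (0,0)); last by rewrite size_takel //; lia.
rewrite nth_take //; rewrite /r; lia.
Qed.

Lemma iter_mul (T : Type) (f : T -> T) a N x : iter (a * N) f x = iter a (iter N f) x.
Proof. by elim: a => //= a IH; rewrite mulSn iterD IH. Qed.

Lemma iterN n q : n < size q -> iter n.+1 (Rn n) q = map inc (take n.+1 q) ++ drop n.+1 q.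
Proof. by move=> hq; rewrite iterR // subnn drop0 take0. Qed.

Lemma iter_inc a x : x.2 < k -> iter a inc x = (x.1, (x.2 + a) %% k).
Proof.
move=> hx; elim: a => [|a IH].
  by rewrite addn0 modn_small //; case: x hx.
by rewrite iterS IH /incr_col /= -[((x.2 + a) %% k).+1]addn1 modnDml addn1 addnS.
Qed.
Lemma iterZ n a q : n < size q ->
  iter a (iter n.+1 (Rn n)) q = map (iter a inc) (take n.+1 q) ++ drop n.+1 q.
Proof.
move=> hq; elim: a => [|a IH]; first by rewrite /= map_id cat_take_drop.
rewrite iterS.
have hs : size (map (iter a inc) (take n.+1 q)) = n.+1 by rewrite size_map size_takel.
rewrite IH iterN; last by rewrite size_cat hs size_drop; lia.
by rewrite take_size_cat // drop_size_cat // -map_comp.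
Qed.

Lemma nth_s n p b : n < size p ->
  nth (0,0) (iter b (Rn n) p) n = iter (b %/ n.+1) inc (nth (0,0) p (n - b %% n.+1)).
Proof.
move=> hp; set m := b %% n.+1; set a := b %/ n.+1.
have hm : m < n.+1 by rewrite /m ltn_pmod.
set q := iter a (iter n.+1 (Rn n)) p.
have hq : q = map (iter a inc) (take n.+1 p) ++ drop n.+1 p by rewrite /q iterZ.
have hs1 : size (map (iter a inc) (take n.+1 p)) = n.+1 by rewrite size_map size_takel.
have hsq : n < size q by rewrite hq size_cat hs1 size_drop; lia.
rewrite {1}(divn_eq b n.+1) addnC iterD iter_mul -/a -/m -/q iterR ?(ltnW hm) //.
rewrite nth_cat size_map size_drop size_takel //.
have -> : (n < n.+1 - (n.+1 - m)) = false by apply/negbTE; rewrite -leqNgt; lia.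
rewrite nth_cat size_takel; last lia.
have -> : n - (n.+1 - (n.+1 - m)) < n.+1 - m by lia.
rewrite nth_take; last lia.
rewrite hq nth_cat hs1.
have -> : n - (n.+1 - (n.+1 - m)) < n.+1 by lia.
rewrite (nth_map (0,0)); last by rewrite size_takel //; lia.
rewrite nth_take; last lia.
by congr (iter _ _ (nth _ _ _)); lia.
Qed.

Lemma s_inj n p b1 b2 : Inv p -> n < size p -> b1 < k * n.+1 -> b2 < k * n.+1 ->
  nth (0,0) (iter b1 (Rn n) p) n = nth (0,0) (iter b2 (Rn n) p) n -> b1 = b2.
Proof.
case/andP=> hu ha hp h1 h2; rewrite !nth_s //.
have hc : forall i, i < size p -> (nth (0,0) p i).2 < k.
  by move=> i hi; move/allP: ha; apply; rewrite mem_nth.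
rewrite !iter_inc ?hc; try lia.
case=> e1 e2.
have hm1 : b1 %% n.+1 < n.+1 by rewrite ltn_pmod.
have hm2 : b2 %% n.+1 < n.+1 by rewrite ltn_pmod.
have em : n - b1 %% n.+1 = n - b2 %% n.+1.
  apply/eqP; rewrite -(nth_uniq 0 (s := map fst p)) ?size_map //; try lia.
  by rewrite !(nth_map (0,0)) ?e1 //; lia.
have em' : b1 %% n.+1 = b2 %% n.+1 by lia.
rewrite em in e2.
have ha1 : b1 %/ n.+1 < k by rewrite ltn_divLR.
have ha2 : b2 %/ n.+1 < k by rewrite ltn_divLR.
have ea : b1 %/ n.+1 = b2 %/ n.+1.
  move/eqP: e2; rewrite eqn_modDl !modn_small //; by move/eqP.
by rewrite (divn_eq b1 n.+1) (divn_eq b2 n.+1) ea em'.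
Qed.

Lemma s_full n p : Inv p -> n < size p -> iter (k * n.+1) (Rn n) p = p.
Proof.
case/andP=> hu ha hp; rewrite iter_mul iterZ //.
rewrite map_id_in ?cat_take_drop // => x /mem_take hx.
have hx2 : x.2 < k by move/allP: ha; apply.
by rewrite iter_inc // modnDr modn_small //; case: x hx hx2.
Qed.

Fixpoint sig n := if n is m.+1 then
  flatten (nseq (k * m.+1).-1 (rcons (sig m) m.+1)) ++ sig m else [::].

Lemma sig_range n : all (fun f => 0 < f <= n) (sig n).
Proof.
elim: n => //= n IH.
have IH' : all (fun f => 0 < f <= n.+1) (sig n).
  by apply: sub_all IH => f /andP [h1 h2]; rewrite h1 /= ltnW.
rewrite all_cat IH' andbT; elim: (k * n.+1).-1 => //= m IHm.
by rewrite all_cat IHm all_rcons IH' ltnSn andbT.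
Qed.

Fixpoint VB (g : nat -> seq cperm) b := if b is b'.+1 then VB g b' ++ g b' else [::].

Definition PP n := forall p, Inv p -> n <= size p ->
  [/\ good [::] (sig n) p,
      (forall j, 0 < j <= n -> fl j (fin (sig n) p) \in tr (sig n) p)
    & fl n (fin (sig n) p) = p].

Lemma PP0 : PP 0.
Proof. by move=> p _ _; split => //= [j|]; [lia | exact: flip0]. Qed.

Lemma fin_tr fs p : fin fs p \in tr fs p.
Proof. by rewrite /tr mem_rcons inE eqxx. Qed.

Lemma Inv_tr fs p q : Inv p -> q \in tr fs p -> Inv q.
Proof. move=> hp; apply: (tr_prop (P := Inv)) => //; exact: Inv_flip. Qed.

Lemma size_tr_mem fs p q : q \in tr fs p -> size q = size p.
Proof. by apply: (tr_prop (P := fun q => size q = size p)) => // i r <-; rewrite size_flip. Qed.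

Lemma PPS n : PP n -> PP n.+1.
Proof.
move=> IH p hp hs.
set sg := sig n.
pose s b := iter b (Rn n) p.
have hsI : forall b, Inv (s b) /\ n < size (s b).
  elim=> [|b [hI hS]]; first by [].
  have hu := fin_tr sg (s b).
  have [_ _ hF] := IH _ hI (ltnW hS).
  have -> : s b.+1 = fl n.+1 (fin sg (s b)).
    rewrite /s iterS -/(s b) flipR ?hF //.
    by rewrite (size_tr_mem hu).
  by rewrite Inv_flip ?size_flip ?(size_tr_mem hu) //; apply: Inv_tr hu.
have hsS : forall b, s b.+1 = fl n.+1 (fin sg (s b)).
  move=> b; have [hI hS] := hsI b.
  have hu := fin_tr sg (s b).
  have [_ _ hF] := IH _ hI (ltnW hS).
  rewrite /s iterS -/(s b) flipR ?hF //.
  by rewrite (size_tr_mem hu).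
have hdist : forall b1 b2, b1 < k * n.+1 -> b2 < k * n.+1 ->
    nth (0,0) (s b1) n = nth (0,0) (s b2) n -> b1 = b2.
  by move=> b1 b2; apply: s_inj.
have hblk : forall b q, q \in tr sg (s b) -> nth (0,0) q n = nth (0,0) (s b) n.
  move=> b q hq; rewrite -[n]addn0 -!nth_drop (tr_drop _ hq) //.
  by apply: sub_all (sig_range n) => f /andP [].
pose g c := tr sg (s c).
have hVB : forall b q, q \in VB g b -> exists2 c, c < b & nth (0,0) q n = nth (0,0) (s c) n.
  elim=> [|b IHb] q //=; rewrite mem_cat => /orP [/IHb [c hc e] | hq].
    by exists c => //; apply: ltnW.
  by exists b => //; apply: hblk.
have hgood0 : forall b, b < k * n.+1 -> good (VB g b) sg (s b).
  move=> b hb; rewrite -(cats0 (VB g b)); apply: good_lift.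
    by have [hI hS] := hsI b; have [] := IH _ hI (ltnW hS).
  move=> q hq; apply/negP => /hVB [c hc e].
  rewrite (hblk _ _ hq) in e; move: (hdist _ _ hb (ltn_trans hc hb) e); lia.
pose blk m := flatten (nseq m (rcons sg n.+1)) ++ sg.
have hblkS : forall m, blk m.+1 = sg ++ n.+1 :: blk m.
  by move=> m; rewrite /blk /= -catA cat_rcons.
have hgood : forall m b, b + m < k * n.+1 -> good (VB g b) (blk m) (s b).
  elim=> [|m IHm] b hb; first by apply: hgood0; rewrite addn0 in hb.
  rewrite hblkS; apply/good_cat; split; first by apply: hgood0; lia.
  rewrite /= rcons_cat -/(tr sg (s b)) -hsS.
  have -> : VB g b ++ tr sg (s b) = VB g b.+1 by [].
  split.
  - apply/negP => /hVB [c hc e].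
    have H1 : b.+1 < k * n.+1 by lia.
    have H2 : c < k * n.+1 by lia.
    have := hdist _ _ H1 H2 e; lia.
  - move=> j hj; rewrite /= mem_cat; apply/orP; right.
    have [hI hS] := hsI b; have [_ hJ _] := IH _ hI (ltnW hS).
    by apply: hJ; lia.
  - by apply: IHm; lia.
have hfin : forall m b, fin (blk m) (s b) = fin sg (s (b + m)).
  elim=> [|m IHm] b; first by rewrite addn0.
  by rewrite hblkS fin_cat /= -hsS IHm addSnnS.
have htr : forall m b q, q \in tr sg (s (b + m)) -> q \in tr (blk m) (s b).
  elim=> [|m IHm] b q; first by rewrite addn0.
  rewrite hblkS tr_cat /= tr_cons -hsS -addSnnS => /IHm hq.
  by rewrite mem_cat inE hq !orbT.
have hsig : sig n.+1 = blk (k * n.+1).-1 by [].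
have hM : (k * n.+1).-1 < k * n.+1 by rewrite prednK // muln_gt0 hk.
have hend : fl n.+1 (fin (sig n.+1) p) = p.
  rewrite hsig (hfin _ 0) add0n -hsS prednK ?muln_gt0 ?hk //.
  by rewrite /s s_full //; lia.
split => //.
- by rewrite hsig; apply: (hgood _ 0).
- move=> j /andP [hj0]; rewrite leq_eqVlt => /orP [/eqP -> | hj].
    by rewrite hend mem_tr_head.
  rewrite hsig (hfin _ 0); apply: (htr _ 0).
  have [hI hS] := hsI (0 + (k * n.+1).-1); have [_ hJ _] := IH _ hI (ltnW hS).
  by apply: hJ; rewrite hj0.
Qed.
End S.
Lemma greedy_prefix n k G G' : greedy_list n k G -> greedy_list n k G' ->
  forall t, t < size G -> t < size G' -> forall u, u <= t -> nth [::] G u = nth [::] G' u.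
Proof.
case=> hG h0 hst hstop [hG' h0' hst' hstop'].
elim=> [|t IH] ht ht' u hu.
  by move: hu; rewrite leqn0 => /eqP ->; rewrite h0 h0'.
rewrite leq_eqVlt in hu; case/orP: hu => [/eqP -> | hu]; last first.
  apply: IH; lia.
have hpre : take t.+1 G = take t.+1 G'.
  apply: (eq_from_nth (x0 := [::])); first by rewrite !size_takel // ltnW.
  move=> i; rewrite size_takel; last exact: ltnW.
  by move=> hi; rewrite !nth_take // IH //; lia.
have ht0 := IH (ltnW ht) (ltnW ht') t (leqnn t).
have [i [hi e hn hm]] := hst t ltac:(lia).
have [i' [hi' e' hn' hm']] := hst' t ltac:(lia).
rewrite e e' ht0.
case: (ltngtP i i') => [lt|lt|-> //].
- have := hm' i; rewrite -hpre -ht0 (negbTE hn); lia.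
- have := hm i'; rewrite hpre ht0 (negbTE hn'); lia.
Qed.

Lemma greedy_size n k G G' : greedy_list n k G -> greedy_list n k G' ->
  size G <= size G'.
Proof.
move=> g g'; rewrite leqNgt; apply/negP => hlt.
have hpre := greedy_prefix g' g.
case: g g' => hG h0 hst hstop [hG' h0' hst' hstop'].
case hsz : (size G') hlt => [|m] hlt.
  by case: G' hG' {hpre hst' hstop' h0'} hsz.
have [i [hi e hn hm]] := hst m ltac:(lia).
have htk : take m.+1 G = G'.
  apply: (eq_from_nth (x0 := [::])); first by rewrite size_takel ?hsz // ltnW.
  move=> j; rewrite size_takel; last exact: ltnW.
  move=> hj; rewrite nth_take // -(hpre m) ?hsz //; last exact: ltnW.
have hl : nth [::] G m = last [::] G'.
  have := hpre m; rewrite hsz ltnSn => /(_ isT (ltnW hlt) m (leqnn m)) <-.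
  by rewrite -nth_last hsz.
by move: hn; rewrite htk hl hstop'.
Qed.

Lemma greedy_uniq n k G G' : greedy_list n k G -> greedy_list n k G' -> G = G'.
Proof.
move=> g g'.
have hs : size G = size G' by apply/eqP; rewrite eqn_leq !(greedy_size g g', greedy_size g' g).
apply: (eq_from_nth (x0 := [::])) => // i hi.
by apply: (greedy_prefix g g' (t := i)) => //; rewrite -hs.
Qed.

Lemma PPall k (hk : 0 < k) n : PP k n.
Proof. elim: n => [|n IH]; [exact: PP0 | exact: PPS]. Qed.

Lemma sig_eq k n : 0 < n -> sigma k n = sig k n.
Proof.
case: n => // n _; elim: n => [|n IH].
  by rewrite /= muln1 cats0; elim: k.-1 => //= m ->.
have E : sigma k n.+2 = flatten (nseq (k * n.+2).-1 (rcons (sigma k n.+1) n.+2)) ++ sigma k n.+1 by [].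
by rewrite E IH.
Qed.

Lemma Inv_start k n : 0 < k -> Inv k (start n).
Proof.
move=> hk; apply/andP; split.
  have -> : map fst (start n) = iota 1 n by rewrite /start; elim: (iota 1 n) => //= x s ->.
  exact: iota_uniq.
by apply/allP => q /mapP [v _ ->].
Qed.

Theorem lemma4 (n k : nat) (hn : 1 <= n) (hk : 1 <= k) :
  (exists G, greedy_list n k G) /\
  forall G, greedy_list n k G ->
    size (sigma k n) = (size G).-1 /\
    forall t, t < (size G).-1 ->
      nth [::] G t.+1 = flip k (nth 0 (sigma k n) t) (nth [::] G t).
Proof.
have hsz : n <= size (start n) by rewrite size_map size_iota.
have [hg hS hF] := PPall hk (Inv_start n hk) hsz.
set G0 := tr k (sig k n) (start n).
have hGL : greedy_list n k G0.
  split.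
  - by move/(congr1 size); rewrite /G0 size_tr.
  - exact: nth_tr0.
  - move=> t; rewrite /G0 size_tr /= => ht.
    have [e hn' hm] := good_nth hg ht.
    exists (nth 0 (sig k n) t); split => //.
    by have := allP (sig_range k n) _ (mem_nth 0 ht).
  - by move=> i hi; rewrite /G0 /tr last_rcons; apply: hS.
split; first by exists G0.
move=> G hG; rewrite -(greedy_uniq hGL hG) sig_eq // /G0 size_tr /=.
split => // t ht.
by have [e _ _] := good_nth hg ht.
Qed.
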